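(* Let $\lambda\in[0,\frac{\pi}{2})$ and let $(|B(\lambda)\rangle,\mathcal{M})$, $\mathcal{M}=(M_1,M_2,M_3)$, be a maximally impossible quantum scenario. Then $|M_1|=|M_2|$.
   Context: For $\varphi\in\mathbb{R}$, $E_\varphi=\cos\varphi X+\sin\varphi Y$ is the equatorial measurement, with $+1$ eigenvector $|\varphi\rangle=\frac{1}{\sqrt2}(|0\rangle+e^{i\varphi}|1\rangle)$ and $-1$ eigenvector $|\varphi+\pi\rangle$; outcomes $+1,-1$ relabelled $0,1$; measurements identified with angles. A measurement scenario $\mathcal{M}=(M_1,M_2,M_3)$ consists of finite nonempty sets $M_i\subseteq[0,\pi)$ of angles for qubit $i$. For a three-qubit state $|\psi\rangle$, the event $(A,B,C)\to(a,b,c)$ with $(A,B,C)\in M_1\times M_2\times M_3$ is impossible if $(\langle A+a\pi|\otimes\langle B+b\pi|\otimes\langle C+c\pi|)|\psi\rangle=0$. For $\lambda\in[0,\frac{\pi}{2})$, $|v_\lambda\rangle=\cos\frac{\lambda}{2}|0\rangle+\sin\frac{\lambda}{2}|1\rangle$, $|w_\lambda\rangle=\sin\frac{\lambda}{2}|0\rangle+\cos\frac{\lambda}{2}|1\rangle$, and the interpolant state is $|B(\lambda)\rangle=\frac{1}{\sqrt2}(|00\rangle|v_\lambda\rangle+|11\rangle|w_\lambda\rangle)$. The quantum scenario $(|B(\lambda)\rangle,\mathcal{M})$ is maximally impossible if for every $C\in M_3$ and every $z\in\{0,1\}$: for every $A\in M_1$ there exist $B\in M_2$ and $a,b\in\{0,1\}$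 with $(A,B,C)\to(a,b,z)$ impossible, and for every $B\in M_2$ there exist $A\in M_1$ and $a,b\in\{0,1\}$ with $(A,B,C)\to(a,b,z)$ impossible. *)

(* Defs.v *)
From Stdlib Require Import Reals List.
From Coquelicot Require Import Coquelicot.
Import ListNotations.
Open Scope R_scope.

Definition cexpi (phi : R) : C := (cos phi, sin phi).

(* Equatorial state |phi> = (|0> + e^{i phi}|1>)/sqrt 2, as a map from the
   computational basis (false = |0>, true = |1>) to amplitudes. *)
Definition eq_ket (phi : R) (x : bool) : C :=
  if x then Cmult (cexpi phi) (RtoC (/ sqrt 2)) else RtoC (/ sqrt 2).

(* Outcome bit a (0 <-> +1, 1 <-> -1) of measurement at angle A selects |A + a pi>. *)
Definition outcome_angle (A : R) (a : bool) : R := if a then A + PI else A.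

Definition state3 := bool -> bool -> bool -> C.

Definition sum_bool (f : bool -> C) : C := Cplus (f false) (f true).

(* (<A+a pi| (x) <B+b pi| (x) <C+c pi|) |psi> *)
Definition amplitude (psi : state3) (A B Cm : R) (a b c : bool) : C :=
  sum_bool (fun x => sum_bool (fun y => sum_bool (fun z =>
    Cmult (Cmult (Cmult (Cconj (eq_ket (outcome_angle A a) x))
                        (Cconj (eq_ket (outcome_angle B b) y)))
                 (Cconj (eq_ket (outcome_angle Cm c) z)))
          (psi x y z)))).

Definition impossible (psi : state3) (A B Cm : R) (a b c : bool) : Prop :=
  amplitude psi A B Cm a b c = RtoC 0.

Definition v_ket (lam : R) (z : bool) : C :=
  if z then RtoC (sin (lam / 2)) else RtoC (cos (lam / 2)).
Definition w_ket (lam : R) (z : bool) : C :=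
  if z then RtoC (cos (lam / 2)) else RtoC (sin (lam / 2)).

Definition B_state (lam : R) : state3 := fun x y z =>
  match x, y with
  | false, false => Cmult (RtoC (/ sqrt 2)) (v_ket lam z)
  | true, true => Cmult (RtoC (/ sqrt 2)) (w_ket lam z)
  | _, _ => RtoC 0
  end.

Definition angle_set (M : list R) : Prop :=
  NoDup M /\ M <> [] /\ (forall t, In t M -> 0 <= t < PI).

Definition maximally_impossible (psi : state3) (M1 M2 M3 : list R) : Prop :=
  forall Cm, In Cm M3 -> forall z : bool,
    (forall A, In A M1 -> exists B a b, In B M2 /\ impossible psi A B Cm a b z) /\
    (forall B, In B M2 -> exists A a b, In A M1 /\ impossible psi A B Cm a b z).

(* Main.v *)
Require Import Defs.
From Stdlib Require Import Reals List Lra Lia.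
From Coquelicot Require Import Coquelicot.
Open Scope R_scope.
Lemma amp_eq lam A B Cm a b z :
  let s := / sqrt 2 in
  let ca := cos (outcome_angle A a) in let sa := sin (outcome_angle A a) in
  let cb := cos (outcome_angle B b) in let sb := sin (outcome_angle B b) in
  let cg := cos (outcome_angle Cm z) in let sg := sin (outcome_angle Cm z) in
  let c := cos (lam/2) in let d := sin (lam/2) in
  let P := ca*cb - sa*sb in let Q := sa*cb + ca*sb in
  amplitude (B_state lam) A B Cm a b z =
   (s^4 * (c + d*cg + P*(d + c*cg) - Q*c*sg),
    - (s^4 * (d*sg + Q*(d+c*cg) + P*c*sg))).
Proof.
intros. unfold amplitude, sum_bool, B_state, eq_ket, v_ket, w_ket, cexpi.
apply injective_projections; simpl; unfold P, Q, s, ca, sa, cb, sb, cg, sg, c, d; ring.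
Qed.

Definition sgb (a : bool) : R := if a then -1 else 1.

Lemma cos_oa A a : cos (outcome_angle A a) = sgb a * cos A.
Proof. destruct a; simpl; [rewrite neg_cos|]; ring. Qed.
Lemma sin_oa A a : sin (outcome_angle A a) = sgb a * sin A.
Proof. destruct a; simpl; [rewrite neg_sin|]; ring. Qed.
Lemma sgb_sq a : sgb a * sgb a = 1.
Proof. destruct a; simpl; ring. Qed.

Lemma cd_pos lam : 0 <= lam < PI / 2 ->
  0 <= sin (lam/2) /\ sin (lam/2) < cos (lam/2).
Proof.
intros [H1 H2].
assert (Hd : 0 <= sin (lam/2)) by (apply sin_ge_0; lra).
assert (Hc : 0 < cos (lam/2)) by (apply cos_gt_0; lra).
assert (Hl : 0 < cos lam) by (apply cos_gt_0; lra).
replace lam with (2 * (lam/2)) in Hl by field.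
rewrite cos_2a in Hl. split; [exact Hd|]. nra.
Qed.

Lemma core lam A1 B1 A2 B2 Cm a1 b1 a2 b2 z :
  0 <= lam < PI / 2 ->
  impossible (B_state lam) A1 B1 Cm a1 b1 z ->
  impossible (B_state lam) A2 B2 Cm a2 b2 z ->
  let P1 := cos (outcome_angle A1 a1) * cos (outcome_angle B1 b1) - sin (outcome_angle A1 a1) * sin (outcome_angle B1 b1) in
  let Q1 := sin (outcome_angle A1 a1) * cos (outcome_angle B1 b1) + cos (outcome_angle A1 a1) * sin (outcome_angle B1 b1) in
  let P2 := cos (outcome_angle A2 a2) * cos (outcome_angle B2 b2) - sin (outcome_angle A2 a2) * sin (outcome_angle B2 b2) in
  let Q2 := sin (outcome_angle A2 a2) * cos (outcome_angle B2 b2) + cos (outcome_angle A2 a2) * sin (outcome_angle B2 b2) in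
  P1 = P2 /\ Q1 = Q2.
Proof.
intros Hl H1 H2 P1 Q1 P2 Q2.
unfold impossible in H1, H2. rewrite amp_eq in H1, H2. cbv zeta in H1, H2.
fold P1 Q1 in H1. fold P2 Q2 in H2.
injection H1; intros I1 R1. injection H2; intros I2 R2.
assert (Z: forall u:R, -u = 0 -> u = 0) by (intros; lra).
apply Z in I1. apply Z in I2.
set (s := / sqrt 2) in *.
assert (Hs : s <> 0) by (unfold s; apply Rinv_neq_0_compat; apply Rgt_not_eq; apply sqrt_lt_R0; lra).
assert (Hs4 : s ^ 4 <> 0) by (apply pow_nonzero; exact Hs).
set (c := cos (lam/2)) in *. set (d := sin (lam/2)) in *.
set (cg := cos (outcome_angle Cm z)) in *. set (sg := sin (outcome_angle Cm z)) in *.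
assert (E1 : c + d*cg + P1*(d + c*cg) - Q1*c*sg = 0).
{ apply (Rmult_eq_reg_l (s^4)); [|exact Hs4]. rewrite Rmult_0_r; rewrite <- R1; simpl; ring. }
assert (E2 : d*sg + Q1*(d+c*cg) + P1*c*sg = 0).
{ apply (Rmult_eq_reg_l (s^4)); [|exact Hs4]. rewrite Rmult_0_r; rewrite <- I1; simpl; ring. }
assert (F1 : c + d*cg + P2*(d + c*cg) - Q2*c*sg = 0).
{ apply (Rmult_eq_reg_l (s^4)); [|exact Hs4]. rewrite Rmult_0_r; rewrite <- R2; simpl; ring. }
assert (F2 : d*sg + Q2*(d+c*cg) + P2*c*sg = 0).
{ apply (Rmult_eq_reg_l (s^4)); [|exact Hs4]. rewrite Rmult_0_r; rewrite <- I2; simpl; ring. }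
destruct (cd_pos lam Hl) as [Hd Hdc]. fold c d in Hd, Hdc.
assert (Hcg : cg * cg + sg * sg = 1) by (unfold cg, sg; rewrite <- (sin2_cos2 (outcome_angle Cm z)); unfold Rsqr; ring).
assert (Hcg1 : -1 <= cg) by (unfold cg; apply COS_bound).
set (al := d + c*cg) in *. set (be := c*sg) in *.
assert (Hab : al*al + be*be > 0).
{ assert (al*al+be*be = c*c + d*d + 2*c*d*cg) by (unfold al, be; nra).
  rewrite H. assert (0 <= c*d) by nra. nra. }
unfold al, be in E1, E2, F1, F2.
assert (G1 : (P1 - P2)*al - (Q1 - Q2)*be = 0).
{ transitivity ((c + d*cg + P1*(d + c*cg) - Q1*c*sg) - (c + d*cg + P2*(d + c*cg) - Q2*c*sg)); [unfold al, be; ring | rewrite E1, F1; ring]. }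
assert (G2 : (Q1 - Q2)*al + (P1 - P2)*be = 0).
{ transitivity ((d*sg + Q1*(d+c*cg) + P1*c*sg) - (d*sg + Q2*(d+c*cg) + P2*c*sg)); [unfold al, be; ring | rewrite E2, F2; ring]. }
assert (K1 : (al*al+be*be)*(P1-P2) = 0).
{ replace ((al*al+be*be)*(P1-P2)) with (al*((P1 - P2)*al - (Q1 - Q2)*be) + be*((Q1 - Q2)*al + (P1 - P2)*be)) by ring.
  rewrite G1, G2; ring. }
assert (K2 : (al*al+be*be)*(Q1-Q2) = 0).
{ replace ((al*al+be*be)*(Q1-Q2)) with (al*((Q1 - Q2)*al + (P1 - P2)*be) - be*((P1 - P2)*al - (Q1 - Q2)*be)) by ring.
  rewrite G1, G2; ring. }
apply Rmult_integral in K1. apply Rmult_integral in K2.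
split; lra.
Qed.

Lemma alg1 (t1 t2 cA sA cB1 sB1 cB2 sB2 : R) :
  t1*t1 = 1 -> t2*t2 = 1 -> cA*cA + sA*sA = 1 ->
  t1*(cA*cB1 - sA*sB1) = t2*(cA*cB2 - sA*sB2) ->
  t1*(sA*cB1 + cA*sB1) = t2*(sA*cB2 + cA*sB2) ->
  sB1*cB2 - cB1*sB2 = 0.
Proof.
intros T1 T2 HA U V.
set (u1 := cA*cB1 - sA*sB1) in *. set (u2 := cA*cB2 - sA*sB2) in *.
set (v1 := sA*cB1 + cA*sB1) in *. set (v2 := sA*cB2 + cA*sB2) in *.
assert (W : t1*t2*(v1*u2 - u1*v2) = 0).
{ replace (t1*t2*(v1*u2 - u1*v2)) with ((t1*v1)*(t2*u2) - (t1*u1)*(t2*v2)) by ring.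
  rewrite U, V. ring. }
assert (Wt : t1*t2 <> 0).
{ intro H. assert (t1*t2*(t1*t2) = 0) by (rewrite H; ring).
  assert (t1*t2*(t1*t2) = 1) by (replace (t1*t2*(t1*t2)) with ((t1*t1)*(t2*t2)) by ring; rewrite T1, T2; ring). lra. }
apply Rmult_integral in W. destruct W as [W|W]; [contradiction|].
replace (sB1*cB2 - cB1*sB2) with ((cA*cA+sA*sA)*(sB1*cB2 - cB1*sB2)) by (rewrite HA; ring).
rewrite <- W. unfold u1, u2, v1, v2. ring.
Qed.

Lemma sin_eq_lemma x y : 0 <= x < PI -> 0 <= y < PI ->
  sin x * cos y - cos x * sin y = 0 -> x = y.
Proof.
intros Hx Hy H. rewrite <- sin_minus in H.
destruct (Rtotal_order x y) as [L|[E|L]]; auto.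
- assert (0 < sin (y - x)) by (apply sin_gt_0; lra).
  replace (y - x) with (- (x - y)) in H0 by ring. rewrite sin_neg in H0. lra.
- assert (0 < sin (x - y)) by (apply sin_gt_0; lra). lra.
Qed.

Lemma sq1 x : cos x * cos x + sin x * sin x = 1.
Proof. rewrite <- (sin2_cos2 x). unfold Rsqr. ring. Qed.

Definition Rel lam Cm A B := exists a b, impossible (B_state lam) A B Cm a b false.

Lemma rel_fun lam Cm A B1 B2 : 0 <= lam < PI/2 ->
  0 <= B1 < PI -> 0 <= B2 < PI -> Rel lam Cm A B1 -> Rel lam Cm A B2 -> B1 = B2.
Proof.
intros Hl HB1 HB2 [a1 [b1 H1]] [a2 [b2 H2]].
destruct (core _ _ _ _ _ _ _ _ _ _ _ Hl H1 H2) as [EP EQ].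
rewrite !cos_oa, !sin_oa in EP, EQ.
apply sin_eq_lemma; auto.
apply (alg1 (sgb a1 * sgb b1) (sgb a2 * sgb b2) (cos A) (sin A)).
- replace (sgb a1 * sgb b1 * (sgb a1 * sgb b1)) with ((sgb a1 * sgb a1) * (sgb b1 * sgb b1)) by ring. rewrite !sgb_sq; ring.
- replace (sgb a2 * sgb b2 * (sgb a2 * sgb b2)) with ((sgb a2 * sgb a2) * (sgb b2 * sgb b2)) by ring. rewrite !sgb_sq; ring.
- apply sq1.
- rewrite <- (Rmult_1_l (_ * (_ - _))). lra.
- lra.
Qed.

Lemma rel_inj lam Cm A1 A2 B : 0 <= lam < PI/2 ->
  0 <= A1 < PI -> 0 <= A2 < PI -> Rel lam Cm A1 B -> Rel lam Cm A2 B -> A1 = A2.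
Proof.
intros Hl HA1 HA2 [a1 [b1 H1]] [a2 [b2 H2]].
destruct (core _ _ _ _ _ _ _ _ _ _ _ Hl H1 H2) as [EP EQ].
rewrite !cos_oa, !sin_oa in EP, EQ.
apply sin_eq_lemma; auto.
apply (alg1 (sgb a1 * sgb b1) (sgb a2 * sgb b2) (cos B) (sin B)).
- replace (sgb a1 * sgb b1 * (sgb a1 * sgb b1)) with ((sgb a1 * sgb a1) * (sgb b1 * sgb b1)) by ring. rewrite !sgb_sq; ring.
- replace (sgb a2 * sgb b2 * (sgb a2 * sgb b2)) with ((sgb a2 * sgb a2) * (sgb b2 * sgb b2)) by ring. rewrite !sgb_sq; ring.
- apply sq1.
- lra.
- lra.
Qed.

Lemma len_le (R' : R -> R -> Prop) (l1 : list R) : NoDup l1 ->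
  (forall a1 a2 b, In a1 l1 -> In a2 l1 -> R' a1 b -> R' a2 b -> a1 = a2) ->
  forall l2, (forall a, In a l1 -> exists b, In b l2 /\ R' a b) ->
  (length l1 <= length l2)%nat.
Proof.
induction l1 as [|a l1 IH]; intros ND Inj l2 Tot; simpl; [lia|].
inversion ND; subst.
destruct (Tot a (or_introl eq_refl)) as [b [Hb Rb]].
assert (Hlt := remove_length_lt Req_EM_T l2 b Hb).
assert (length l1 <= length (remove Req_EM_T b l2))%nat.
{ apply IH; auto.
  - intros; eapply Inj; eauto; right; auto.
  - intros a' Ha'. destruct (Tot a' (or_intror Ha')) as [b' [Hb' Rb']].
    exists b'. split; auto. apply in_in_remove; auto.
    intro E; subst b'. apply H1. replace a with a'; auto.
    eapply Inj; eauto; [right; auto | left; auto]. }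
lia.
Qed.

Theorem lemma11 (lam : R) (M1 M2 M3 : list R) :
  0 <= lam < PI / 2 ->
  angle_set M1 -> angle_set M2 -> angle_set M3 ->
  maximally_impossible (B_state lam) M1 M2 M3 ->
  length M1 = length M2.
Proof.
intros Hl [N1 [_ R1]] [N2 [_ R2]] [_ [NE3 _]] MI.
destruct M3 as [|Cm M3]; [congruence|].
destruct (MI Cm (or_introl eq_refl) false) as [T1 T2].
apply Nat.le_antisymm.
- apply (len_le (Rel lam Cm)); auto.
  + intros a1 a2 b H1 H2 X1 X2. destruct X1 as [u [v X1]].
    eapply rel_inj; eauto. exists u, v. exact X1.
  + intros a Ha. destruct (T1 a Ha) as [b [u [v [Hb Hi]]]]. exists b; split; auto. exists u, v; auto.
- apply (len_le (fun b a => Rel lam Cm a b)); auto.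
  + intros b1 b2 a H1 H2 X1 X2. eapply rel_fun; eauto.
  + intros b Hb. destruct (T2 b Hb) as [a [u [v [Ha Hi]]]]. exists a; split; auto. exists u, v; auto.
Qed.
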